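(* Let $L$ be an oriented, ordered, possibly non-compatible virtual link diagram with an affine bilabeling $C$. Then the multi-variable affine index polynomial $p_{(L,C)}$ is an invariant of $(L,C)$ under Reidemeister moves performed away from the starting points of the coloring. Moreover, it is a Vassiliev invariant of order one of the pair $(L,C)$.
   Context: **Diagrams.** A virtual link diagram is an oriented planar diagram of ordered closed curves $L_1,\dots,L_n$ (components) with classical crossings (with over/under information) and virtual crossings. **Crossing conventions.** Draw a classical crossing with both strands oriented upward. - The bottom-left-to-top-right strand has index change $-1$; the bottom-right-to-top-left strand has index change $+1$. - The crossing is positive ($\operatorname{sgn}=+1$) if the overstrand is the bottom-left-to-top-right strand, and negative otherwise. - Self-crossings have both strands on one component; external crossings have strands on different components. - The weight $n_i$ of component $L_i$ is the sum of the index changes of $L_i$ over its passages through external classical crossings. **Affine bilabeling $C$.** - Each component $L_i$ gets a starting point with bilabel $(a^{(i)}_1,a^{(i)}_2)$ of formal integer variables, distinct for different components. - Travel along $L_i$ in its orientation, carrying the bilabel. It is unchanged at virtual crossings. - On passing a classical crossing with index change $\varepsilon$, the first entry changes by $\varepsilon$ at a self-crossing, and the second entry changes by $\varepsilon$ at an external crossing. - On returning to the starting point, the label is $(a^{(i)}_1,a^{(i)}_2+n_i)$. This discrepancy is absorbed at the starting point, which carries the weight $n_i$; the labeling is discontinuous there. **Weights and polynomial.** Let $|(x,y)|=x+y$. With both strands drawn upward: - if $c$ is positive, $W(c)=|\text{bottom-left}|-|\text{top-left}|$; - if $c$ is negative, $W(c)=|\text{bottom-right}|-|\text{top-right}|$.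 Then $p_{(L,C)}(t_1,\dots,t_n)=\sum_c\operatorname{sgn}(c)(t_{o(c)}^{W(c)}-1)$, summed over classical crossings, where $o(c)$ is the component of the overstrand. **Vassiliev invariants.** - Singular virtual links have finitely many double points, assumed away from the starting points. - The extension of an invariant $V$ is $V(L_\times)=V(L_+)-V(L_-)$, with $L_\pm$ the positive/negative resolutions of a double point, applied iteratively. - Colorings of singular links are obtained by treating double points as crossings for label propagation, which is sign-independent. - Order $\le m$ means the extension vanishes on all singular links with more than $m$ double points. - Order one means order $\le 1$ but not order $\le 0$. *)

(* Defs.v *)
From HB Require Import structures.
From mathcomp Require Import all_boot all_order all_algebra.
From mathcomp Require Import finmap.
From mathcomp Require Import monalg.

Set Implicit Arguments.
Unset Strict Implicit.
Unset Printing Implicit Defensive.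

Import Order.TTheory GRing.Theory Num.Theory.
Local Open Scope ring_scope.

(* Combinatorial model of (singular) virtual link diagrams with starting     *)
(* points: Gauss diagrams cut open at the starting points.                   *)
(* A passage through a classical crossing (or double point) is a pair        *)
(* (c, b) : nat * bool where c is the name of the crossing and b = true iff  *)
(* the passing strand is the bottom-left-to-top-right strand when both       *)
(* strands are drawn upward (index change -1); b = false means the           *)
(* bottom-right-to-top-left strand (index change +1).                        *)
(* Component i (i : 'I_n) is the sequence of passages met when travelling    *)
(* along L_i from its starting point.  Virtual crossings are invisible.      *)
(* Each crossing has a kind: positive, negative, or double point.  For a     *)
(* positive crossing the BL->TR strand is the overstrand, for a negative one *)
(* the BR->TL strand is the overstrand.                                      *)

Inductive ckind := Pos | Neg | Dbl.

Definition ckind_eqb (x y : ckind) : bool :=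
  match x, y with Pos, Pos | Neg, Neg | Dbl, Dbl => true | _, _ => false end.
Lemma ckind_eqP : Equality.axiom ckind_eqb.
Proof. by case; case; constructor. Qed.
HB.instance Definition _ := hasDecEq.Build ckind ckind_eqP.

Definition passage := (nat * bool)%type.

Record diagram (n : nat) := Diagram {
  words : 'I_n -> seq passage;
  kind : nat -> ckind }.

Section Diagrams.
Variable n : nat.
Implicit Types D : diagram n.

Definition all_passages D : seq passage := flatten [seq words D i | i <- enum 'I_n].

Definition crossings D : seq nat := undup [seq p.1 | p <- all_passages D & p.2].

Definition wf D : Prop :=
  forall c : nat, count_mem (c, true) (all_passages D) = count_mem (c, false) (all_passages D)
                  /\ (count_mem (c, true) (all_passages D) <= 1)%N.

Definition dpoints D : seq nat := [seq c <- crossings D | kind D c == Dbl].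

Definition classical D : Prop := forall c, c \in crossings D -> kind D c != Dbl.

(* Labels take values in G * G for an additive group G; [u] is the integer 1 *)
(* in G and [a i] the starting bilabel of component i. *)
Variables (G : zmodType) (u : G) (a : 'I_n -> G * G).

Definition index_change (p : passage) : G := if p.2 then - u else u.

Definition selfp D (i : 'I_n) (p : passage) : bool := (p.1, ~~ p.2) \in words D i.

(* bilabel of component i just before its k-th passage (k = 0 is the starting *)
(* point; the label just after the k-th passage is [label D i k.+1]) *)
Definition label D (i : 'I_n) (k : nat) : G * G :=
  ((a i).1 + \sum_(p <- take k (words D i) | selfp D i p) index_change p,
   (a i).2 + \sum_(p <- take k (words D i) | ~~ selfp D i p) index_change p).

Definition lnorm (x : G * G) : G := x.1 + x.2.

Definition tmon (o : 'I_n) (g : G) : {malg int[{ffun 'I_n -> G}]} :=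
  << [ffun j => if j == o then g else 0] >>.

Definition aff_term D (c : nat) : {malg int[{ffun 'I_n -> G}]} :=
  let pL := (c, true) in let pR := (c, false) in
  match [pick i | pL \in words D i], [pick i | pR \in words D i] with
  | Some iL, Some iR =>
      let kL := index pL (words D iL) in
      let kR := index pR (words D iR) in
      match kind D c with
      | Pos => (* W = |bottom-left| - |top-left|, overstrand = BL->TR strand *)
          tmon iL (lnorm (label D iL kL) - lnorm (label D iR kR.+1)) - << 0 >>
      | Neg => (* W = |bottom-right| - |top-right|, overstrand = BR->TL strand *)
          - (tmon iR (lnorm (label D iR kR) - lnorm (label D iL kL.+1)) - << 0 >>)
      | Dbl => 0
      end
  | _, _ => 0
  end.

Definition aff_poly D : {malg int[{ffun 'I_n -> G}]} :=
  \sum_(c <- crossings D) aff_term D c.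

End Diagrams.

(* The group of formal integer combinations of 1 and the 2n formal variables *)
(* a^(i)_1, a^(i)_2. *)
Definition formalG (n : nat) : zmodType := (int * {ffun 'I_n -> int * int})%type.
Definition formal_u (n : nat) : formalG n := (1, 0).
Definition formal_labels (n : nat) (i : 'I_n) : formalG n * formalG n :=
  ((0, [ffun j => if j == i then (1, 0) else 0]),
   (0, [ffun j => if j == i then (0, 1) else 0])).

Definition affp (n : nat) (D : diagram n) :=
  aff_poly (formal_u n) (@formal_labels n) D.

(* A context has k holes (inr j), each occurring exactly once; filling the *)
(* holes with segments of passages gives the words of a diagram. *)
Section Moves.
Variable n : nat.

Definition fill k (w : seq (passage + 'I_k)) (s : 'I_k -> seq passage) : seq passage :=
  flatten [seq match x with inl p => [:: p] | inr j => s j end | x <- w].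

Definition holes_once k (C : 'I_n -> seq (passage + 'I_k)) : Prop :=
  forall j : 'I_k, (\sum_(i < n) count_mem (inr j) (C i))%N = 1%N.

Definition ctx_free k (C : 'I_n -> seq (passage + 'I_k)) (c : nat) : Prop :=
  forall i b, inl (c, b) \notin C i.

Definition is_classical_kind (x : ckind) : bool := x != Dbl.
Definition over_flag (x : ckind) : bool := x == Pos.
Definition sgnk (x : ckind) : int := if x == Pos then 1 else -1.

Definition R1step (D D' : diagram n) : Prop :=
  exists (C : 'I_n -> seq (passage + 'I_1)) (c : nat) (b : bool),
    [/\ holes_once C /\ ctx_free C c,
        (forall i, words D i = fill (C i) (fun _ => [::])),
        (forall i, words D' i = fill (C i) (fun _ => [:: (c, b); (c, ~~ b)])),
        is_classical_kind (kind D' c) &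
        (forall c', c' != c -> kind D' c' = kind D c')].

(* R2: creation of a bigon with new crossings c, d of opposite signs; hole 0 *)
(* is the overstrand segment, hole 1 the understrand segment *)
Definition R2step (D D' : diagram n) : Prop :=
  exists (C : 'I_n -> seq (passage + 'I_2)) (c d : nat) (swap : bool),
    let kc := kind D' c in let kd := kind D' d in
    let sover := [:: (c, over_flag kc); (d, over_flag kd)] in
    let sunder := if swap then [:: (d, ~~ over_flag kd); (c, ~~ over_flag kc)]
                  else [:: (c, ~~ over_flag kc); (d, ~~ over_flag kd)] in
    [/\ [/\ holes_once C, ctx_free C c, ctx_free C d & c != d],
        (forall i, words D i = fill (C i) (fun _ => [::])),
        (forall i, words D' i = fill (C i) (fun j => if j == ord0 then sover else sunder)),
        [/\ is_classical_kind kc, is_classical_kind kd & kc != kd] &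
        (forall c', c' != c -> c' != d -> kind D' c' = kind D c')].

(* R3: crossings x (top over middle), y (top over bottom), z (middle over *)
(* bottom); hole 0 = top segment, hole 1 = middle, hole 2 = bottom.  eT, eM, *)
(* eB record whether x precedes y on the top segment, x precedes z on the  *)
(* middle one, y precedes z on the bottom one.  The sign conditions are     *)
(* exactly those for which the configuration is a planar triangle; the move *)
(* reverses the three segments and keeps the signs. *)
Definition R3step (D D' : diagram n) : Prop :=
  exists (C : 'I_n -> seq (passage + 'I_3)) (x y z : nat) (eT eM eB : bool),
    let kx := kind D x in let ky := kind D y in let kz := kind D z in
    let ord2 (e : bool) (p q : passage) := if e then [:: p; q] else [:: q; p] in
    let sT := ord2 eT (x, over_flag kx) (y, over_flag ky) in
    let sM := ord2 eM (x, ~~ over_flag kx) (z, over_flag kz) in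
    let sB := ord2 eB (y, ~~ over_flag ky) (z, ~~ over_flag kz) in
    let segs (j : 'I_3) := if val j == 0%N then sT else if val j == 1%N then sM else sB in
    let sgnb (e : bool) : int := if e then 1 else -1 in
    [/\ [/\ holes_once C, uniq [:: x; y; z] &
           [&& is_classical_kind kx, is_classical_kind ky & is_classical_kind kz]],
        sgnb eM * sgnk kx = sgnb eB * sgnk ky /\
        sgnb eT * sgnk kx = sgnb eB * sgnk kz,
        (forall i, words D i = fill (C i) segs),
        (forall i, words D' i = fill (C i) (fun j => rev (segs j))) &
        kind D' =1 kind D].

Definition rstep (D D' : diagram n) : Prop := [\/ R1step D D', R2step D D' | R3step D D'].

Definition rmove (D D' : diagram n) : Prop := rstep D D' \/ rstep D' D.

Definition resolve (D : diagram n) (c : nat) (k : ckind) : diagram n :=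
  Diagram (words D) (fun c' => if c' == c then k else kind D c').

End Moves.

Section Vassiliev.
Variable M : nat -> zmodType.
Variable V : forall n, diagram n -> M n.

Fixpoint vext_rec n (D : diagram n) (cs : seq nat) : M n :=
  match cs with
  | [::] => V D
  | c :: cs' => vext_rec (resolve D c Pos) cs' - vext_rec (resolve D c Neg) cs'
  end.

Definition vext n (D : diagram n) : M n := vext_rec D (dpoints D).

Definition vorder_le (m : nat) : Prop :=
  forall n (D : diagram n), wf D -> (m < size (dpoints D))%N -> vext D = 0.

End Vassiliev.

(* Main.v *)
Require Import Defs.
From mathcomp Require Import all_boot all_order all_algebra.
From mathcomp Require Import finmap monalg.
From mathcomp Require Import zify.

Set Implicit Arguments.
Unset Strict Implicit.
Unset Printing Implicit Defensive.
Import Order.TTheory GRing.Theory Num.Theory.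
Local Open Scope ring_scope.


Definition icz (p : passage) : int := if p.2 then -1 else 1.
Definition isum (w : seq passage) : int := \sum_(p <- w) icz p.

Lemma isum_cat w1 w2 : isum (w1 ++ w2) = isum w1 + isum w2.
Proof. by rewrite /isum big_cat. Qed.
Lemma isum_cons p w : isum (p :: w) = icz p + isum w.
Proof. by rewrite /isum big_cons. Qed.
Lemma isum_nil : isum [::] = 0.
Proof. by rewrite /isum big_nil. Qed.

Lemma fill_cons k (x : passage + 'I_k) w s :
  fill (x :: w) s = (match x with inl p => [:: p] | inr j => s j end) ++ fill w s.
Proof. by []. Qed.
Lemma fill_nil k (s : 'I_k -> seq passage) : fill [::] s = [::].
Proof. by []. Qed.
Lemma fill_cat k (w1 w2 : seq (passage + 'I_k)) s : fill (w1 ++ w2) s = fill w1 s ++ fill w2 s.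
Proof. by rewrite /fill map_cat flatten_cat. Qed.

Lemma mem_fill k (w : seq (passage + 'I_k)) s p :
  (p \in fill w s) = (inl p \in w) || has (fun x => if x is inr j then p \in s j else false) w.
Proof.
elim: w => [|x w IH] //=; rewrite fill_cons mem_cat IH in_cons.
case: x => [q|j] /=; last by rewrite orbCA.
by rewrite mem_seq1 orbA.
Qed.

Lemma mem_fill_nohole k (w : seq (passage + 'I_k)) s p :
  (forall j, p \notin s j) -> (p \in fill w s) = (inl p \in w).
Proof.
move=> H; rewrite mem_fill; case: (inl p \in w) => //=.
by apply/hasP => -[[q|j] _ //]; rewrite (negbTE (H j)).
Qed.

Lemma isum_fill k (w : seq (passage + 'I_k)) s s' :
  (forall j, isum (s j) = isum (s' j)) -> isum (fill w s) = isum (fill w s').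
Proof.
move=> H; elim: w => [|x w IH] //; rewrite !fill_cons !isum_cat IH.
by case: x => // j; rewrite H.
Qed.

Lemma isum_take_fill k (w : seq (passage + 'I_k)) s p :
  (forall j, p \notin s j) ->
  isum (take (index p (fill w s)) (fill w s)) = isum (fill (take (index (inl p) w) w) s).
Proof.
move=> H; elim: w => [|x w IH] //; rewrite fill_cons.
case: x => [q|j] /=.
  rewrite /= eq_sym; have [->|ne] := eqVneq q p; first by rewrite eqxx.
  have -> : (inl q == inl p :> passage + 'I_k) = false.
    by apply/eqP => -[E]; rewrite E eqxx in ne.
  by rewrite /= fill_cons /= !isum_cons IH.
rewrite index_cat (negbTE (H j)) take_cat ltnNge leq_addr /= addKn.
by rewrite fill_cons !isum_cat IH.
Qed.

Lemma isum_take_succ (w : seq passage) p :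
  isum (take (index p w).+1 w) = isum (take (index p w) w) + (if p \in w then icz p else 0).
Proof.
case: ifP => pw.
  rewrite (take_nth p); last by rewrite index_mem.
  by rewrite -cats1 isum_cat nth_index // /isum big_seq1.
rewrite memNindex ?pw // take_oversize ?take_size ?addr0 //.
Qed.

Lemma notin_take_index (T : eqType) (x : T) s : x \notin take (index x s) s.
Proof.
elim: s => //= y s IH; have [->|ne] := eqVneq y x; first by [].
by rewrite /= in_cons negb_or IH andbT eq_sym.
Qed.

Lemma split_index (T : eqType) (x : T) s : x \in s ->
  s = take (index x s) s ++ x :: drop (index x s).+1 s.
Proof. by move=> xs; rewrite -drop_index // cat_take_drop. Qed.

Lemma isum_take_hole k (w : seq (passage + 'I_k)) s p j (b : bool) :
  inr j \in w -> p \in s j -> inl p \notin w -> (forall j', j' != j -> p \notin s j') ->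
  isum (take (index p (fill w s) + b) (fill w s)) =
  isum (fill (take (index (inr j) w) w) s) + isum (take (index p (s j) + b) (s j)).
Proof.
move=> jw ps pw Hj.
have nj := notin_take_index (inr j) w.
have np : p \notin fill (take (index (inr j) w) w) s.
  rewrite mem_fill negb_or; apply/andP; split.
    by apply: contra pw; apply: mem_take.
  apply/hasPn => -[q|j'] // jin; have [E|ne] := eqVneq j' j.
    by move: jin; rewrite E (negbTE nj).
  exact: Hj.
rewrite {1 2}(split_index jw) fill_cat fill_cons index_cat (negbTE np).
rewrite -addnA take_cat ltnNge leq_addr /= addKn index_cat ps takel_cat.
  by rewrite isum_cat.
by case: b; rewrite ?addn0 ?addn1 ?index_mem // ltnW // index_mem.
Qed.

Lemma pick_some (T : finType) (P : pred T) i0 :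
  (forall i, P i = (i == i0)) -> [pick i | P i] = Some i0.
Proof.
move=> H; case: pickP => [x|N].
  by rewrite H => /eqP ->.
by move: (N i0); rewrite H eqxx.
Qed.


Section Gen.
Variables (n : nat) (G : zmodType) (u : G) (a : 'I_n -> G * G).

Lemma lnorm_label (D : diagram n) i k :
  lnorm (label u a D i k) = lnorm (a i) + u *~ isum (take k (words D i)).
Proof.
rewrite /lnorm /label /= addrACA; congr (_ + _).
rewrite /isum mulrz_sumr [in RHS](bigID (selfp D i)) /=.
by congr (_ + _); apply: eq_bigr => p _; rewrite /index_change /icz;
  case: p.2; rewrite ?mulrN1z ?mulr1z.
Qed.

Definition term_form (k : ckind) (io : 'I_n) (g : G) : {malg int[{ffun 'I_n -> G}]} :=
  match k with
  | Pos => tmon io g - << 0 >>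
  | Neg => - (tmon io g - << 0 >>)
  | Dbl => 0 end.

Definition Wg (io iu : 'I_n) (P Q : int) : G :=
  (lnorm (a io) + u *~ P) - (lnorm (a iu) + u *~ Q).

Definition preI (D : diagram n) i p := isum (take (index p (words D i)) (words D i)).
Definition postI (D : diagram n) i p := isum (take (index p (words D i)).+1 (words D i)).

Definition AT (oL oR : option 'I_n) (k : ckind) (NL NL1 NR NR1 : 'I_n -> G)
  : {malg int[{ffun 'I_n -> G}]} :=
  match oL, oR with
  | Some iL, Some iR =>
      match k with
      | Pos => tmon iL (NL iL - NR1 iR) - << 0 >>
      | Neg => - (tmon iR (NR iR - NL1 iL) - << 0 >>)
      | Dbl => 0
      end
  | _, _ => 0
  end.

Lemma aff_termE (D : diagram n) c : aff_term u a D c =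
  AT [pick i | (c,true) \in words D i] [pick i | (c,false) \in words D i] (kind D c)
    (fun i => lnorm (label u a D i (index (c,true) (words D i))))
    (fun i => lnorm (label u a D i (index (c,true) (words D i)).+1))
    (fun i => lnorm (label u a D i (index (c,false) (words D i))))
    (fun i => lnorm (label u a D i (index (c,false) (words D i)).+1)).
Proof. by []. Qed.


Lemma aff_term_form (D : diagram n) c io iu :
  kind D c != Dbl ->
  (forall i, ((c, over_flag (kind D c)) \in words D i) = (i == io)) ->
  (forall i, ((c, ~~ over_flag (kind D c)) \in words D i) = (i == iu)) ->
  aff_term u a D c = term_form (kind D c) io
     (Wg io iu (preI D io (c, over_flag (kind D c))) (postI D iu (c, ~~ over_flag (kind D c)))).
Proof.
move=> kD Ho Hu.
rewrite aff_termE.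
have [Ek|Ek] : kind D c = Pos \/ kind D c = Neg by move: kD; case: (kind D c) => //; auto.
  rewrite Ek in Ho Hu *.
  have Ho' : forall i, ((c,true) \in words D i) = (i == io) by exact: Ho.
  have Hu' : forall i, ((c,false) \in words D i) = (i == iu) by exact: Hu.
  rewrite (pick_some Ho') (pick_some Hu') /AT /term_form !lnorm_label /preI /postI.
  by [].
rewrite Ek in Ho Hu *.
have Ho' : forall i, ((c,false) \in words D i) = (i == io) by exact: Ho.
have Hu' : forall i, ((c,true) \in words D i) = (i == iu) by exact: Hu.
rewrite (pick_some Ho') (pick_some Hu') /AT /term_form !lnorm_label /preI /postI.
by [].
Qed.
Lemma AT_congr oL oR k (f1 f2 f3 f4 g1 g2 g3 g4 : 'I_n -> G) :
  (forall i, f1 i = g1 i) -> (forall i, f2 i = g2 i) ->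
  (forall i, f3 i = g3 i) -> (forall i, f4 i = g4 i) ->
  AT oL oR k f1 f2 f3 f4 = AT oL oR k g1 g2 g3 g4.
Proof.
move=> E1 E2 E3 E4; rewrite /AT.
case: oL => [iL|]; last by [].
case: oR => [iR|]; last by [].
case: k; [by rewrite E1 E4 | by rewrite E3 E2 | by []].
Qed.

Lemma aff_term_ext (D D' : diagram n) c :
  kind D c = kind D' c ->
  (forall i b, ((c,b) \in words D i) = ((c,b) \in words D' i)) ->
  (forall i b, preI D i (c,b) = preI D' i (c,b)) ->
  aff_term u a D c = aff_term u a D' c.
Proof.
move=> Hk Hm Hs; rewrite !aff_termE Hk.
have -> : [pick i | (c,true) \in words D i] = [pick i | (c,true) \in words D' i].
  by apply: eq_pick => i; rewrite /= Hm.
have -> : [pick i | (c,false) \in words D i] = [pick i | (c,false) \in words D' i].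
  by apply: eq_pick => i; rewrite /= Hm.
have E1 : forall i b, lnorm (label u a D i (index (c,b) (words D i))) =
     lnorm (label u a D' i (index (c,b) (words D' i))).
  by move=> i b; rewrite !lnorm_label; have := Hs i b; rewrite /preI => ->.
have E2 : forall i b, lnorm (label u a D i (index (c,b) (words D i)).+1) =
     lnorm (label u a D' i (index (c,b) (words D' i)).+1).
  move=> i b; rewrite !lnorm_label !isum_take_succ Hm.
  by have := Hs i b; rewrite /preI => ->.
by apply: AT_congr.
Qed.

Lemma aff_term_zero (D : diagram n) c :
  (forall i, (c,true) \notin words D i) -> aff_term u a D c = 0.
Proof.
move=> H; rewrite /aff_term; case: pickP => [i Hi|_] //.
by rewrite (negbTE (H i)) in Hi.
Qed.

Lemma mem_crossings (D : diagram n) c i : (c,true) \in words D i -> c \in crossings D.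
Proof.
move=> H; rewrite /crossings mem_undup.
apply/mapP; exists (c,true) => //; rewrite mem_filter /=.
by apply/flattenP; exists (words D i) => //; apply/mapP; exists i; rewrite ?mem_enum.
Qed.

Lemma aff_term_notcross (D : diagram n) c : c \notin crossings D -> aff_term u a D c = 0.
Proof.
move=> H; apply: aff_term_zero => i; apply: contra H; exact: mem_crossings.
Qed.

Lemma affp_sum (D : diagram n) L : uniq L -> {subset crossings D <= L} ->
  aff_poly u a D = \sum_(x <- L) aff_term u a D x.
Proof.
move=> uL sub; rewrite (bigID (fun x => x \in crossings D)) /=.
rewrite [X in _ = _ + X]big1 ?addr0; last by move=> x /aff_term_notcross.
rewrite -big_filter /aff_poly; apply: perm_big.
apply: uniq_perm; first exact: undup_uniq.
  exact: filter_uniq.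
by move=> x; rewrite mem_filter; case: (boolP (x \in crossings D)) => // /sub ->.
Qed.

End Gen.

Lemma count_memE (T : eqType) (x : T) s : (0 < count_mem x s)%N = (x \in s).
Proof. by rewrite -has_count has_pred1. Qed.

Lemma holes_comp n k (C : 'I_n -> seq (passage + 'I_k)) : holes_once C ->
  forall j, exists ij, forall i, (inr j \in C i) = (i == ij).
Proof.
move=> hC j; have S := hC j.
case: (pickP (fun i => 0 < count_mem (inr j) (C i))%N) => [ij Hij | N]; last first.
  by move: S; rewrite big1 // => i _; move: (N i) => /= /negbT; rewrite -leqNgt leqn0 => /eqP.
exists ij => i; rewrite -count_memE; have [->|ne] := eqVneq i ij; first by [].
apply/negbTE; rewrite -leqNgt leqn0; apply/eqP.
move: S; rewrite (bigD1 ij) //= (bigD1 i) /=; last exact: ne.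
move: Hij => /=; lia.
Qed.

Lemma mem_fill_hole k (w : seq (passage + 'I_k)) s p j :
  inl p \notin w -> (forall j', j' != j -> p \notin s j') -> p \in s j ->
  (p \in fill w s) = (inr j \in w).
Proof.
move=> pw Hj ps; rewrite mem_fill (negbTE pw) /=.
apply/hasP/idP => [[[q|j'] //] jw pj | jw].
  have [E|ne] := eqVneq j' j; first by rewrite -E.
  by rewrite (negbTE (Hj _ ne)) in pj.
by exists (inr j).
Qed.

Section Gen2.
Variables (n : nat) (G : zmodType) (u : G) (a : 'I_n -> G * G).

Lemma hole_data k (C : 'I_n -> seq (passage + 'I_k)) (D : diagram n) s j ij p :
  (forall i, words D i = fill (C i) s) -> (forall i, (inr j \in C i) = (i == ij)) ->
  (forall i, inl p \notin C i) -> p \in s j -> (forall j', j' != j -> p \notin s j') ->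
  [/\ forall i, (p \in words D i) = (i == ij),
     preI D ij p = isum (fill (take (index (inr j) (C ij)) (C ij)) s) + isum (take (index p (s j)) (s j)) &
     postI D ij p = isum (fill (take (index (inr j) (C ij)) (C ij)) s) + isum (take (index p (s j)).+1 (s j))].
Proof.
move=> HD Hij Hp ps Hj; split.
- by move=> i; rewrite HD (mem_fill_hole (Hp i) Hj ps) Hij.
- have jw : inr j \in C ij by rewrite Hij.
  have := isum_take_hole false jw ps (Hp ij) Hj; rewrite !addn0 /preI HD; exact.
- have jw : inr j \in C ij by rewrite Hij.
  have := isum_take_hole true jw ps (Hp ij) Hj; rewrite !addn1 /postI HD; exact.
Qed.

Lemma ctx_old k (C : 'I_n -> seq (passage + 'I_k)) (D D' : diagram n) s s' c :
  (forall i, words D i = fill (C i) s) -> (forall i, words D' i = fill (C i) s') ->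
  (forall j, isum (s j) = isum (s' j)) ->
  (forall j b, (c,b) \notin s j) -> (forall j b, (c,b) \notin s' j) ->
  kind D c = kind D' c -> aff_term u a D c = aff_term u a D' c.
Proof.
move=> HD HD' hs n1 n2 hk; apply: aff_term_ext => // [i b|i b].
  by rewrite HD HD' !mem_fill_nohole.
rewrite /preI HD HD' !isum_take_fill //; exact: isum_fill.
Qed.

Lemma Wg_eq (io iu : 'I_n) P Q P' Q' : P - Q = P' - Q' -> Wg u a io iu P Q = Wg u a io iu P' Q'.
Proof.
move=> H; have -> : P' = P + (P' - P) by rewrite addrC subrK.
have -> : Q' = Q + (P' - P) by lia.
set t := P' - P; rewrite /Wg !mulrzDr !addrA [in RHS]opprD addrACA subrr addr0.
by rewrite [in RHS]opprD addrACA subrr addr0.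
Qed.

Lemma tmon0 (i : 'I_n) : tmon i (0 : G) = << 0 >>.
Proof. by rewrite /tmon; congr (<< _ >>); apply/ffunP => j; rewrite !ffunE; case: ifP. Qed.

Lemma term_form0 k (io : 'I_n) : term_form k io (0 : G) = 0.
Proof. by case: k => //=; rewrite tmon0 subrr ?oppr0. Qed.

Lemma Wg_same (io : 'I_n) P : Wg u a io io P P = 0.
Proof. by rewrite /Wg subrr. Qed.

End Gen2.


Lemma kink_int (c : nat) (b ov : bool) :
  isum (take (index (c, ~~ov) [:: (c,b); (c,~~b)]).+1 [:: (c,b); (c,~~b)])
  = isum (take (index (c,ov) [:: (c,b); (c,~~b)]) [:: (c,b); (c,~~b)]).
Proof.
case: b; case: ov; rewrite /= ?xpair_eqE ?eqxx /=.
all: by rewrite /isum ?big_cons ?big_nil /icz /= ?addr0 ?addNr ?addrN.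
Qed.

Lemma r2_int (c d : nat) (oc sw : bool) : c != d ->
  let sover : seq passage := [:: (c, oc); (d, ~~ oc)] in
  let sunder : seq passage := if sw then [:: (d, oc); (c, ~~ oc)] else [:: (c, ~~ oc); (d, oc)] in
  isum (take (index (c,oc) sover) sover) - isum (take (index (c,~~oc) sunder).+1 sunder) =
  isum (take (index (d,~~oc) sover) sover) - isum (take (index (d,oc) sunder).+1 sunder).
Proof.
move=> cd /=; have dc : d != c by rewrite eq_sym.
case: oc; case: sw; rewrite /= ?xpair_eqE ?eqxx ?(negbTE cd) ?(negbTE dc) /=.
all: rewrite /isum ?big_cons ?big_nil /icz /=; lia.
Qed.

Lemma ord2_cases (j : 'I_2) : j != ord0 -> j = Ordinal (isT : (1 < 2)%N).
Proof. by case: j => [[|[|m]] Hm] // _; apply: val_inj. Qed.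

Section Moves.
Variables (n : nat) (G : zmodType) (u : G) (a : 'I_n -> G * G).

Lemma R1_inv (D D' : diagram n) : R1step D D' -> aff_poly u a D = aff_poly u a D'.
Proof.
case=> C [c [b [[hC fC] HD HD' kc Hk]]].
have hs : forall j, isum ((fun _ : 'I_1 => [::] : seq passage) j) =
                    isum ((fun _ : 'I_1 => [:: (c,b); (c,~~b)]) j).
  by move=> j; rewrite /= isum_cons isum_cons isum_nil /icz; case: (b).
pose L := undup (crossings D ++ crossings D').
have uL : uniq L := undup_uniq _.
have s1 : {subset crossings D <= L}.
  by move=> x xD; rewrite mem_undup mem_cat xD.
have s2 : {subset crossings D' <= L}.
  by move=> x xD; rewrite mem_undup mem_cat xD orbT.
rewrite (affp_sum u a uL s1) (affp_sum u a uL s2).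
apply: eq_bigr => x _.
have [->|ne] := eqVneq x c; last first.
  apply: (ctx_old u a HD HD' hs) => [j b'|j b'|]; last by rewrite Hk.
    by [].
  by rewrite !inE !xpair_eqE (negbTE ne).
rewrite aff_term_zero; last by move=> i; rewrite HD mem_fill_nohole // (fC i true).
have [i0 Hi0] := holes_comp hC ord0.
have kD : kind D' c != Dbl := kc.
have [Mo Po _] := hole_data HD' Hi0 (p := (c, over_flag (kind D' c))) (fun i => fC i _)
   (ltac:(by case: (b); case: (over_flag _); rewrite !inE ?eqxx ?orbT))
   (fun j' => ltac:(by rewrite (ord1 j') eqxx)).
have [Mu _ Qu] := hole_data HD' Hi0 (p := (c, ~~ over_flag (kind D' c))) (fun i => fC i _)
   (ltac:(by case: (b); case: (over_flag _); rewrite !inE ?eqxx ?orbT))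
   (fun j' => ltac:(by rewrite (ord1 j') eqxx)).
rewrite (aff_term_form u a kD Mo Mu) Po Qu.
set P := isum (fill _ _).
rewrite kink_int.
by rewrite Wg_same term_form0.
Qed.

Lemma term_form_cancel k1 k2 (io : 'I_n) (g : G) :
  k1 != Dbl -> k2 != Dbl -> k1 != k2 -> term_form k1 io g + term_form k2 io g = 0.
Proof.
case: k1; case: k2 => h1 h2 h3; try (exfalso; by rewrite ?eqxx in h1 h2 h3).
  by rewrite /term_form addrN.
by rewrite /term_form addNr.
Qed.

Lemma R2_core (D D' : diagram n) (C : 'I_n -> seq (passage + 'I_2)) c d (sw oc : bool) :
  holes_once C -> ctx_free C c -> ctx_free C d -> c != d ->
  (forall i, words D i = fill (C i) (fun _ => [::])) ->
  (forall i, words D' i = fill (C i) (fun j : 'I_2 => if j == ord0 then [:: (c, oc); (d, ~~ oc)]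
       else if sw then [:: (d, oc); (c, ~~ oc)] else [:: (c, ~~ oc); (d, oc)])) ->
  kind D' c != Dbl -> kind D' d != Dbl -> kind D' c != kind D' d ->
  (forall c', c' != c -> c' != d -> kind D' c' = kind D c') ->
  over_flag (kind D' c) = oc -> over_flag (kind D' d) = ~~ oc ->
  aff_poly u a D = aff_poly u a D'.
Proof.
move=> hC fc fd cd HD HD' kcc kdc kne Hk Ec Ed.
have dc : d != c by rewrite eq_sym.
pose s' : 'I_2 -> seq passage := fun j => if j == ord0 then [:: (c, oc); (d, ~~ oc)]
       else if sw then [:: (d, oc); (c, ~~ oc)] else [:: (c, ~~ oc); (d, oc)].
have hs : forall j, isum ((fun _ : 'I_2 => [::] : seq passage) j) = isum (s' j).
  move=> j; rewrite /s'; case: (j == ord0); last case: (sw);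
  by rewrite /= !isum_cons isum_nil /icz; case: (oc).
have HDs : forall i, words D' i = fill (C i) s' by exact: HD'.
pose j1 : 'I_2 := Ordinal (isT : (1 < 2)%N).
have j1c : forall j' : 'I_2, j' != j1 -> j' = ord0.
  by case=> [[|[|m]] Hm] // _; apply: val_inj.
have [io Hio] := holes_comp hC ord0.
have [iu Hiu] := holes_comp hC j1.
have s'0 : s' ord0 = [:: (c, oc); (d, ~~ oc)] by [].
have s'1 : s' j1 = if sw then [:: (d, oc); (c, ~~ oc)] else [:: (c, ~~ oc); (d, oc)] by [].
have n0 : forall j', j' != ord0 -> s' j' = s' j1.
  move=> j' h; rewrite /s' (negbTE h); by [].
have [Mc1 Pc _] := hole_data HDs Hio (p := (c, oc)) (fun i => fc i _)
   (ltac:(by rewrite s'0 inE eqxx))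
   (fun j' h => ltac:(by rewrite (n0 _ h) s'1; case: (sw); rewrite !inE !xpair_eqE ?eqxx ?(negbTE cd) ?(negbTE dc) /=; case: (oc))).
have [Md1 Pd _] := hole_data HDs Hio (p := (d, ~~ oc)) (fun i => fd i _)
   (ltac:(by rewrite s'0 !inE eqxx orbT))
   (fun j' h => ltac:(by rewrite (n0 _ h) s'1; case: (sw); rewrite !inE !xpair_eqE ?eqxx ?(negbTE cd) ?(negbTE dc) /=; case: (oc))).
have [Mc2 _ Qc] := hole_data HDs Hiu (p := (c, ~~ oc)) (fun i => fc i _)
   (ltac:(by rewrite s'1; case: (sw); rewrite !inE eqxx ?orbT))
   (fun j' h => ltac:(by rewrite (j1c _ h) s'0 !inE !xpair_eqE ?eqxx ?(negbTE cd) ?(negbTE dc) /=; case: (oc))).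
have [Md2 _ Qd] := hole_data HDs Hiu (p := (d, oc)) (fun i => fd i _)
   (ltac:(by rewrite s'1; case: (sw); rewrite !inE eqxx ?orbT))
   (fun j' h => ltac:(by rewrite (j1c _ h) s'0 !inE !xpair_eqE ?eqxx ?(negbTE cd) ?(negbTE dc) /=; case: (oc))).
have tc := aff_term_form u a kcc (io := io) (iu := iu)
   (ltac:(by move=> i; rewrite Ec Mc1)) (ltac:(by move=> i; rewrite Ec Mc2)).
have td := aff_term_form u a kdc (io := io) (iu := iu)
   (ltac:(by move=> i; rewrite Ed Md1)) (ltac:(by move=> i; rewrite Ed negbK Md2)).
rewrite Ec Pc Qc in tc; rewrite Ed negbK Pd Qd in td.
have tcd : aff_term u a D' c + aff_term u a D' d = 0.
  rewrite tc td.
  set Pre0 := isum (fill (take (index (inr ord0) (C io)) (C io)) s').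
  set Pre1 := isum (fill (take (index (inr j1) (C iu)) (C iu)) s').
  have -> : Wg u a io iu (Pre0 + isum (take (index (d, ~~ oc) (s' ord0)) (s' ord0)))
                (Pre1 + isum (take (index (d, oc) (s' j1)).+1 (s' j1))) =
            Wg u a io iu (Pre0 + isum (take (index (c, oc) (s' ord0)) (s' ord0)))
                (Pre1 + isum (take (index (c, ~~ oc) (s' j1)).+1 (s' j1))).
    apply: Wg_eq; rewrite s'0 s'1; have := r2_int oc sw cd; rewrite /=; lia.
  exact: (term_form_cancel _ _ kcc kdc kne).
have z0 : forall x, x \in [:: c; d] -> aff_term u a D x = 0.
  move=> x; rewrite !inE => /orP[] /eqP ->; apply: aff_term_zero => i;
  by rewrite HD mem_fill_nohole // ?(fc i true) ?(fd i true).
pose L0 := [seq x <- undup (crossings D ++ crossings D') | x \notin [:: c; d]].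
have uL : uniq (c :: d :: L0).
  have cL : c \notin L0 by rewrite mem_filter !inE eqxx.
  have dL : d \notin L0 by rewrite mem_filter !inE eqxx orbT.
  by rewrite /= in_cons negb_or cd cL dL filter_uniq // undup_uniq.
have sub : forall D0 : diagram n, {subset crossings D0 <= crossings D ++ crossings D'} ->
   {subset crossings D0 <= c :: d :: L0}.
  move=> D0 h x /h xD; rewrite !inE mem_filter mem_undup xD !inE andbT.
  by case: (x == c); case: (x == d).
rewrite (affp_sum u a uL (sub D (fun x h => ltac:(by rewrite mem_cat h)))).
rewrite (affp_sum u a uL (sub D' (fun x h => ltac:(by rewrite mem_cat h orbT)))).
have zc : aff_term u a D c = 0 by apply: z0; rewrite inE eqxx.
have zd : aff_term u a D d = 0 by apply: z0; rewrite !inE eqxx orbT.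
rewrite !big_cons zc zd add0r add0r addrA tcd add0r.
apply: eq_big_seq => x; rewrite mem_filter !inE negb_or => /andP[/andP[xc xd] _].
apply: (ctx_old u a HD HDs hs) => [j b|j b|]; last by rewrite Hk.
  by [].
rewrite /s'; case: (j == ord0); last case: (sw);
by rewrite /= !inE !xpair_eqE (negbTE xc) (negbTE xd).
Qed.

Lemma R2_inv (D D' : diagram n) : R2step D D' -> aff_poly u a D = aff_poly u a D'.
Proof.
case=> C [c [d [sw /= [[hC fc fd cd] HD HD' [kcc kdc kne] Hk]]]].
have Ed : over_flag (kind D' d) = ~~ over_flag (kind D' c).
  by move: kcc kdc kne; case: (kind D' c); case: (kind D' d).
apply: (@R2_core D D' C c d sw (over_flag (kind D' c))) => //.
by move=> i; rewrite HD' Ed negbK.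
Qed.
End Moves.


Lemma int_shift (P0 P1 X Y X' Y' : int) : X - Y = X' - Y' -> (P0 + X) - (P1 + Y) = (P0 + X') - (P1 + Y').
Proof. lia. Qed.

Definition r3segs (x y z : nat) (eT eM eB ox oy oz : bool) (j : 'I_3) : seq passage :=
  if val j == 0%N then (if eT then [:: (x,ox); (y,oy)] else [:: (y,oy); (x,ox)])
  else if val j == 1%N then (if eM then [:: (x,~~ox); (z,oz)] else [:: (z,oz); (x,~~ox)])
  else (if eB then [:: (y,~~oy); (z,~~oz)] else [:: (z,~~oz); (y,~~oy)]).

Definition j0 : 'I_3 := Ordinal (isT : (0 < 3)%N).
Definition j1 : 'I_3 := Ordinal (isT : (1 < 3)%N).
Definition j2 : 'I_3 := Ordinal (isT : (2 < 3)%N).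

Definition sg (b : bool) : int := if b then 1 else -1.

Lemma r3_int_x x y z eT eM eB ox oy oz : x != y -> x != z -> y != z ->
  sg eM * sg ox = sg eB * sg oy -> sg eT * sg ox = sg eB * sg oz ->
  let S := r3segs x y z eT eM eB ox oy oz in
  isum (take (index (x,ox) (S j0)) (S j0)) - isum (take (index (x,~~ox) (S j1)).+1 (S j1)) =
  isum (take (index (x,ox) (rev (S j0))) (rev (S j0))) -
  isum (take (index (x,~~ox) (rev (S j1))).+1 (rev (S j1))).
Proof.
move=> xy xz yz h1 h2 S; rewrite {}/S.
have yx : y != x by rewrite eq_sym. have zx : z != x by rewrite eq_sym.
have zy : z != y by rewrite eq_sym.
move: h1 h2; rewrite /r3segs /=.
case: eT; case: eM; case: eB; case: ox; case: oy; case: oz;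
  rewrite /= ?xpair_eqE ?eqxx ?(negbTE xy) ?(negbTE yx) ?(negbTE xz) ?(negbTE zx) ?(negbTE yz) ?(negbTE zy) /=;
  rewrite /isum ?big_cons ?big_nil /icz /sg /=; lia.
Qed.

Lemma r3_int_y x y z eT eM eB ox oy oz : x != y -> x != z -> y != z ->
  sg eM * sg ox = sg eB * sg oy -> sg eT * sg ox = sg eB * sg oz ->
  let S := r3segs x y z eT eM eB ox oy oz in
  isum (take (index (y,oy) (S j0)) (S j0)) - isum (take (index (y,~~oy) (S j2)).+1 (S j2)) =
  isum (take (index (y,oy) (rev (S j0))) (rev (S j0))) -
  isum (take (index (y,~~oy) (rev (S j2))).+1 (rev (S j2))).
Proof.
move=> xy xz yz h1 h2 S; rewrite {}/S.
have yx : y != x by rewrite eq_sym. have zx : z != x by rewrite eq_sym.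
have zy : z != y by rewrite eq_sym.
move: h1 h2; rewrite /r3segs /=.
case: eT; case: eM; case: eB; case: ox; case: oy; case: oz;
  rewrite /= ?xpair_eqE ?eqxx ?(negbTE xy) ?(negbTE yx) ?(negbTE xz) ?(negbTE zx) ?(negbTE yz) ?(negbTE zy) /=;
  rewrite /isum ?big_cons ?big_nil /icz /sg /=; lia.
Qed.

Lemma r3_int_z x y z eT eM eB ox oy oz : x != y -> x != z -> y != z ->
  sg eM * sg ox = sg eB * sg oy -> sg eT * sg ox = sg eB * sg oz ->
  let S := r3segs x y z eT eM eB ox oy oz in
  isum (take (index (z,oz) (S j1)) (S j1)) - isum (take (index (z,~~oz) (S j2)).+1 (S j2)) =
  isum (take (index (z,oz) (rev (S j1))) (rev (S j1))) -
  isum (take (index (z,~~oz) (rev (S j2))).+1 (rev (S j2))).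
Proof.
move=> xy xz yz h1 h2 S; rewrite {}/S.
have yx : y != x by rewrite eq_sym. have zx : z != x by rewrite eq_sym.
have zy : z != y by rewrite eq_sym.
move: h1 h2; rewrite /r3segs /=.
case: eT; case: eM; case: eB; case: ox; case: oy; case: oz;
  rewrite /= ?xpair_eqE ?eqxx ?(negbTE xy) ?(negbTE yx) ?(negbTE xz) ?(negbTE zx) ?(negbTE yz) ?(negbTE zy) /=;
  rewrite /isum ?big_cons ?big_nil /icz /sg /=; lia.
Qed.

Lemma I3 (j : 'I_3) : j = j0 \/ j = j1 \/ j = j2.
Proof. by case: j => [[|[|[|m]]] Hm]; [left|right;left|right;right|]; try apply: val_inj. Qed.

Lemma r3_fst x y z eT eM eB ox oy oz j p :
  p \in r3segs x y z eT eM eB ox oy oz j -> p.1 \in [:: x; y; z].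
Proof.
rewrite /r3segs; case: (val j == 0%N); last case: (val j == 1%N);
by case: (eT); case: (eM); case: (eB); rewrite /= !inE => /orP[]/eqP-> /=; rewrite ?inE ?eqxx ?orbT.
Qed.

Ltac r3m xy yx xz zx yz zy eT eM eB ox oy oz :=
  rewrite /r3segs /= ?mem_rev;
  case: (eT); case: (eM); case: (eB); case: (ox); case: (oy); case: (oz);
  rewrite /= ?inE ?xpair_eqE ?eqxx ?(negbTE xy) ?(negbTE yx) ?(negbTE xz)
     ?(negbTE zx) ?(negbTE yz) ?(negbTE zy) ?orbT ?orbF.

Section R3.
Variables (n : nat) (G : zmodType) (u : G) (a : 'I_n -> G * G).

Lemma hole_term k (C : 'I_n -> seq (passage + 'I_k)) (D D' : diagram n) s s' t jo ju io iu :
  (forall i, words D i = fill (C i) s) -> (forall i, words D' i = fill (C i) s') ->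
  (forall j, isum (s j) = isum (s' j)) ->
  kind D t != Dbl -> kind D' t = kind D t ->
  (forall i b, inl (t,b) \notin C i) ->
  (forall i, (inr jo \in C i) = (i == io)) -> (forall i, (inr ju \in C i) = (i == iu)) ->
  (t, over_flag (kind D t)) \in s jo -> (t, over_flag (kind D t)) \in s' jo -> (t, ~~ over_flag (kind D t)) \in s ju -> (t, ~~ over_flag (kind D t)) \in s' ju ->
  (forall j, j != jo -> (t, over_flag (kind D t)) \notin s j) -> (forall j, j != jo -> (t, over_flag (kind D t)) \notin s' j) ->
  (forall j, j != ju -> (t, ~~ over_flag (kind D t)) \notin s j) -> (forall j, j != ju -> (t, ~~ over_flag (kind D t)) \notin s' j) ->
  isum (take (index (t, over_flag (kind D t)) (s jo)) (s jo)) - isum (take (index (t, ~~ over_flag (kind D t)) (s ju)).+1 (s ju)) =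
  isum (take (index (t, over_flag (kind D t)) (s' jo)) (s' jo)) - isum (take (index (t, ~~ over_flag (kind D t)) (s' ju)).+1 (s' ju)) ->
  aff_term u a D t = aff_term u a D' t.
Proof.
move=> HD HD' hs kt kt' fC Hio Hiu m1 m2 m3 m4 n1 n2 n3 n4 E.
have [M1 P1 _] := hole_data HD Hio (fun i => fC i _) m1 n1.
have [M2 _ Q1] := hole_data HD Hiu (fun i => fC i _) m3 n3.
have [M3 P2 _] := hole_data HD' Hio (fun i => fC i _) m2 n2.
have [M4 _ Q2] := hole_data HD' Hiu (fun i => fC i _) m4 n4.
have kt2 : kind D' t != Dbl by rewrite kt'.
rewrite (aff_term_form u a kt M1 M2).
have M3' : forall i, ((t, over_flag (kind D' t)) \in words D' i) = (i == io) by rewrite kt'.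
have M4' : forall i, ((t, ~~ over_flag (kind D' t)) \in words D' i) = (i == iu) by rewrite kt'.
rewrite (aff_term_form u a kt2 M3' M4') kt' P1 Q1 P2 Q2.
rewrite (isum_fill _ hs) [X in Wg _ _ _ _ _ (X + _)](isum_fill _ hs).
rewrite (@Wg_eq _ _ u a io iu _ _ (isum (fill (take (index (inr jo) (C io)) (C io)) s') +
    isum (take (index (t, over_flag (kind D t)) (s' jo)) (s' jo)))
   (isum (fill (take (index (inr ju) (C iu)) (C iu)) s') +
    isum (take (index (t, ~~ over_flag (kind D t)) (s' ju)).+1 (s' ju)))); first by [].
exact: int_shift.
Qed.


Lemma R3_core (D D' : diagram n) C x y z eT eM eB ox oy oz :
  holes_once C -> uniq [:: x; y; z] ->
  kind D x != Dbl -> kind D y != Dbl -> kind D z != Dbl ->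
  over_flag (kind D x) = ox -> over_flag (kind D y) = oy -> over_flag (kind D z) = oz ->
  sg eM * sg ox = sg eB * sg oy -> sg eT * sg ox = sg eB * sg oz ->
  (forall i, words D i = fill (C i) (r3segs x y z eT eM eB ox oy oz)) ->
  (forall i, words D' i = fill (C i) (fun j => rev (r3segs x y z eT eM eB ox oy oz j))) ->
  kind D' =1 kind D ->
  (forall t b i, t \in [:: x; y; z] -> inl (t,b) \notin C i) ->
  aff_poly u a D = aff_poly u a D'.
Proof.
move=> hC uxyz kx ky kz Ex Ey Ez h1 h2 HD HD' Hk fC.
have xy : x != y by apply: contraTneq uxyz => ->; rewrite /= !inE eqxx.
have xz : x != z by apply: contraTneq uxyz => ->; rewrite /= !inE eqxx ?orbT.
have yz : y != z by apply: contraTneq uxyz => ->; rewrite /= !inE eqxx ?orbT ?andbF.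
have yx : y != x by rewrite eq_sym. have zx : z != x by rewrite eq_sym.
have zy : z != y by rewrite eq_sym.
have hs : forall j, isum (r3segs x y z eT eM eB ox oy oz j) =
                    isum ((fun j => rev (r3segs x y z eT eM eB ox oy oz j)) j).
  by move=> j; rewrite /isum big_rev.
have [i0 Hi0] := holes_comp hC j0.
have [i1 Hi1] := holes_comp hC j1.
have [i2 Hi2] := holes_comp hC j2.
pose L := undup (crossings D ++ crossings D').
have uL : uniq L := undup_uniq _.
have s1 : {subset crossings D <= L}.
  by move=> t tD; rewrite mem_undup mem_cat tD.
have s2 : {subset crossings D' <= L}.
  by move=> t tD; rewrite mem_undup mem_cat tD orbT.
rewrite (affp_sum u a uL s1) (affp_sum u a uL s2).
apply: eq_bigr => t _.
have [tin|tout] := boolP (t \in [:: x; y; z]); last first.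
  apply: (ctx_old u a HD HD' hs) => [j b|j b|]; last by rewrite Hk.
    by apply/negP => /r3_fst /= tin; rewrite tin in tout.
  by rewrite /= mem_rev; apply/negP => /r3_fst /= tin; rewrite tin in tout.
move: tin; rewrite !inE => /orP[/eqP->|/orP[/eqP->|/eqP->]].
- apply: (hole_term HD HD' hs kx (Hk x) (fun i b => fC x b i (mem_head _ _)) Hi0 Hi1);
    rewrite ?Ex.
  1-4: by r3m xy yx xz zx yz zy eT eM eB ox oy oz.
  1-4: move=> j hj; case: (I3 j) hj => [->|[->|->]]; rewrite ?eqxx // => _;
       by r3m xy yx xz zx yz zy eT eM eB ox oy oz.
  exact: r3_int_x.
- apply: (hole_term HD HD' hs ky (Hk y) (fun i b => fC y b i (ltac:(by rewrite !inE eqxx ?orbT))) Hi0 Hi2);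
    rewrite ?Ey.
  1-4: by r3m xy yx xz zx yz zy eT eM eB ox oy oz.
  1-4: move=> j hj; case: (I3 j) hj => [->|[->|->]]; rewrite ?eqxx // => _;
       by r3m xy yx xz zx yz zy eT eM eB ox oy oz.
  exact: r3_int_y.
- apply: (hole_term HD HD' hs kz (Hk z) (fun i b => fC z b i (ltac:(by rewrite !inE eqxx ?orbT))) Hi1 Hi2);
    rewrite ?Ez.
  1-4: by r3m xy yx xz zx yz zy eT eM eB ox oy oz.
  1-4: move=> j hj; case: (I3 j) hj => [->|[->|->]]; rewrite ?eqxx // => _;
       by r3m xy yx xz zx yz zy eT eM eB ox oy oz.
  exact: r3_int_z.
Qed.

End R3.


Lemma count_all_passages n (D : diagram n) q :
  count_mem q (all_passages D) = (\sum_(i < n) count_mem q (words D i))%N.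
Proof. by rewrite /all_passages count_flatten sumnE !big_map /index_enum unlock. Qed.

Lemma wf_ctx_free n (D : diagram n) k (C : 'I_n -> seq (passage + 'I_k)) s j p :
  wf D -> holes_once C -> (forall i, words D i = fill (C i) s) -> p \in s j ->
  forall i, inl p \notin C i.
Proof.
move=> wfD hC HD ps i; apply/negP => pi.
have [ij Hij] := holes_comp hC j.
have le1 : (count_mem p (all_passages D) <= 1)%N.
  case: p ps pi => c b ps pi; have [h1 h2] := wfD c; case: b ps pi => ps pi //.
  by rewrite -h1.
rewrite count_all_passages in le1.
have ci : (0 < count_mem p (words D i))%N.
  by rewrite count_memE HD mem_fill pi.
have cj : (0 < count_mem p (words D ij))%N.
  rewrite count_memE HD mem_fill; apply/orP; right; apply/hasP; exists (inr j) => //.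
  by rewrite Hij.
have [E|ne] := eqVneq i ij.
  subst ij.
  have jw : inr j \in C i by rewrite Hij.
  have : (1 < count_mem p (words D i))%N.
    rewrite HD (split_index jw) fill_cat fill_cons !count_cat.
    have c2 : (0 < count_mem p (s j))%N by rewrite count_memE.
    have : p \in fill (take (index (inr j) (C i)) (C i)) s ++ fill (drop (index (inr j) (C i)).+1 (C i)) s.
      rewrite mem_cat !mem_fill.
      move: pi; rewrite {1}(split_index jw) mem_cat in_cons => /orP[->//|/orP[//|->]].
      by rewrite orbT.
    rewrite -count_memE count_cat => h; rewrite addnCA; exact: (leq_add c2 h).
  move: le1; rewrite (bigD1 i) //=; lia.
move: le1; rewrite (bigD1 i) //= (bigD1 ij) /=; last by rewrite eq_sym.
rewrite addnA => h; have h2 := leq_trans (leq_addr _ _) h; have := leq_trans (leq_add ci cj) h2; by [].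
Qed.


Lemma r3_cover x y z eT eM eB ox oy oz t b : t \in [:: x; y; z] ->
  exists j, (t, b) \in r3segs x y z eT eM eB ox oy oz j.
Proof.
rewrite !inE => /orP[/eqP->|/orP[/eqP->|/eqP->]].
- have [E|E] := eqVneq b ox.
    by exists j0; rewrite /r3segs /= E; case: (eT); rewrite !inE eqxx ?orbT.
  exists j1; rewrite /r3segs /=; have -> : b = ~~ ox by move: E; case: (b); case: (ox).
  by case: (eM); rewrite !inE eqxx ?orbT.
- have [E|E] := eqVneq b oy.
    by exists j0; rewrite /r3segs /= E; case: (eT); rewrite !inE eqxx ?orbT.
  exists j2; rewrite /r3segs /=; have -> : b = ~~ oy by move: E; case: (b); case: (oy).
  by case: (eB); rewrite !inE eqxx ?orbT.
- have [E|E] := eqVneq b oz.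
    by exists j1; rewrite /r3segs /= E; case: (eM); rewrite !inE eqxx ?orbT.
  exists j2; rewrite /r3segs /=; have -> : b = ~~ oz by move: E; case: (b); case: (oz).
  by case: (eB); rewrite !inE eqxx ?orbT.
Qed.

Section R3b.
Variables (n : nat) (G : zmodType) (u : G) (a : 'I_n -> G * G).

Lemma R3_inv (D D' : diagram n) : R3step D D' -> wf D \/ wf D' -> aff_poly u a D = aff_poly u a D'.
Proof.
case=> C [x [y [z [eT [eM [eB /= [[hC uxyz kc] [h1 h2] HD HD' Hk]]]]]]] wfD.
case/and3P: kc => kx ky kz.
have HDs : forall i, words D i = fill (C i) (r3segs x y z eT eM eB
    (over_flag (kind D x)) (over_flag (kind D y)) (over_flag (kind D z))) by exact: HD.
have HDs' : forall i, words D' i = fill (C i) (fun j => rev (r3segs x y z eT eM eB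
    (over_flag (kind D x)) (over_flag (kind D y)) (over_flag (kind D z)) j)) by exact: HD'.
apply: (R3_core u a hC uxyz kx ky kz erefl erefl erefl h1 h2 HDs HDs' Hk).
move=> t b i tin; have [j hj] := r3_cover eT eM eB (over_flag (kind D x))
   (over_flag (kind D y)) (over_flag (kind D z)) b tin.
case: wfD => w.
  exact: (wf_ctx_free w hC HDs hj).
by apply: (wf_ctx_free w hC HDs'); rewrite mem_rev; exact: hj.
Qed.
End R3b.


Section V.
Variables (n : nat) (G : zmodType) (u : G) (a : 'I_n -> G * G).

Lemma aff_term_kind (E E' : diagram n) x :
  words E = words E' -> kind E x = kind E' x -> aff_term u a E x = aff_term u a E' x.
Proof.
move=> Hw Hk; apply: aff_term_ext => // [i b|i b]; by rewrite /preI Hw.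
Qed.

Lemma crossings_words (E E' : diagram n) : words E = words E' -> crossings E = crossings E'.
Proof. by move=> Hw; rewrite /crossings /all_passages Hw. Qed.

Definition hV (E : diagram n) d :=
  \sum_(x <- crossings E) (aff_term u a (resolve E d Pos) x - aff_term u a (resolve E d Neg) x).

Lemma hV_words (E E' : diagram n) d : words E = words E' -> hV E d = hV E' d.
Proof.
move=> Hw; rewrite /hV (crossings_words Hw); apply: eq_bigr => x _.
have [->|ne] := eqVneq x d.
  have k1 : kind (resolve E d Pos) d = kind (resolve E' d Pos) d by rewrite /= eqxx.
  have k2 : kind (resolve E d Neg) d = kind (resolve E' d Neg) d by rewrite /= eqxx.
  rewrite (aff_term_kind (E:=resolve E d Pos) (E':=resolve E' d Pos) Hw k1)
    (aff_term_kind (E:=resolve E d Neg) (E':=resolve E' d Neg) Hw k2).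
  reflexivity.
have k1 : kind (resolve E d Pos) x = kind (resolve E d Neg) x by rewrite /= (negbTE ne).
have k2 : kind (resolve E' d Pos) x = kind (resolve E' d Neg) x by rewrite /= (negbTE ne).
rewrite (aff_term_kind (E:=resolve E d Pos) (E':=resolve E d Neg) (erefl _) k1)
  (aff_term_kind (E:=resolve E' d Pos) (E':=resolve E' d Neg) (erefl _) k2) !subrr.
reflexivity.
Qed.

End V.

Lemma vext_rec_cons (M : nat -> zmodType) (V : forall m, diagram m -> M m) n (E : diagram n) c cs :
  vext_rec V E (c :: cs) = vext_rec V (resolve E c Pos) cs - vext_rec V (resolve E c Neg) cs.
Proof. by []. Qed.

Lemma vext_main n (cs : seq nat) : forall E : diagram n,
  (size cs = 1%N -> vext_rec affp E cs = hV (formal_u n) (@formal_labels n) E (head 0%N cs)) /\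
  ((1 < size cs)%N -> vext_rec affp E cs = 0).
Proof.
elim: cs => [|c cs IH] E; first by split.
split.
  case: cs IH => // _ _.
  rewrite vext_rec_cons /= /affp /aff_poly /hV.
  rewrite (_ : crossings (resolve E c Pos) = crossings E) //.
  rewrite (_ : crossings (resolve E c Neg) = crossings E) //.
  rewrite -sumrB; reflexivity.
case: cs IH => [|d cs] IH // _.
rewrite vext_rec_cons.
case: cs IH => [|e cs] IH.
  rewrite (proj1 (IH _)) // (proj1 (IH _)) //= (@hV_words _ _ _ _ (resolve E c Pos) E) //.
  rewrite (@hV_words _ _ _ _ (resolve E c Neg) E) // subrr; reflexivity.
rewrite (proj2 (IH _)) // (proj2 (IH _)) // subrr; reflexivity.
Qed.

Lemma vorder1 : vorder_le affp 1.
Proof.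
move=> n D wfD hsz; rewrite /vext; exact: (proj2 (vext_main (dpoints D) D) hsz).
Qed.

Definition Dex : diagram 2 :=
  Diagram (fun i : 'I_2 => if val i == 0%N then [:: (0%N,true)] else [:: (0%N,false)]) (fun _ => Dbl).
Definition Fex (v : nat) : seq passage := if v == 0%N then [:: (0%N,true)] else [:: (0%N,false)].
Lemma ap : all_passages Dex = [:: (0%N,true); (0%N,false)].
Proof.
rewrite /all_passages.
have -> : [seq words Dex i | i <- enum 'I_2] = [seq Fex v | v <- [seq val i | i <- enum 'I_2]].
  by rewrite -(map_comp Fex val); apply: eq_map.
by rewrite val_enum_ord.
Qed.
Lemma cr : crossings Dex = [:: 0%N].
Proof. by rewrite /crossings ap. Qed.
Lemma dp : dpoints Dex = [:: 0%N].
Proof. by rewrite /dpoints cr. Qed.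
Lemma wfex : wf Dex.
Proof. move=> c; rewrite ap; have [->|ne] := eqVneq c 0%N; first by []. by rewrite /= !xpair_eqE /= (eq_sym 0%N) (negbTE ne). Qed.

Definition i0 : 'I_2 := ord0.
Definition i1 : 'I_2 := Ordinal (isT : (1 < 2)%N).

Lemma wordsE (i : 'I_2) : words Dex i = if i == i0 then [:: (0%N,true)] else [:: (0%N,false)].
Proof. by case: i => [[|[|m]] Hm]. Qed.

Definition gg (k : ckind) := formal_u 2.
Lemma g1_neq0 : Wg (formal_u 2) (@formal_labels 2) i0 i1 0 1 != 0.
Proof.
apply/eqP => /(congr1 fst).
by rewrite /Wg mulr0z mulr1z /=.
Qed.

Notation U2 := (formal_u 2).
Notation A2 := (@formal_labels 2).

Lemma affpE k : affp (resolve Dex 0%N k) = aff_term U2 A2 (resolve Dex 0%N k) 0%N.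
Proof.
rewrite /affp /aff_poly (_ : crossings (resolve Dex 0%N k) = [:: 0%N]); last exact: cr.
by rewrite big_seq1.
Qed.

Lemma termP : aff_term U2 A2 (resolve Dex 0%N Pos) 0%N = term_form Pos i0 (Wg U2 A2 i0 i1 0 1).
Proof.
have kP : kind (resolve Dex 0%N Pos) 0%N != Dbl by [].
have M1 : forall i, ((0%N, over_flag (kind (resolve Dex 0%N Pos) 0%N)) \in words (resolve Dex 0%N Pos) i) = (i == i0).
  by case=> [[|[|m]] Hm].
have M2 : forall i, ((0%N, ~~ over_flag (kind (resolve Dex 0%N Pos) 0%N)) \in words (resolve Dex 0%N Pos) i) = (i == i1).
  by case=> [[|[|m]] Hm].
rewrite (aff_term_form U2 A2 kP M1 M2).
have -> : preI (resolve Dex 0%N Pos) i0 (0%N, over_flag (kind (resolve Dex 0%N Pos) 0%N)) = 0.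
  by rewrite /preI /= /isum big_nil.
have -> : postI (resolve Dex 0%N Pos) i1 (0%N, ~~ over_flag (kind (resolve Dex 0%N Pos) 0%N)) = 1.
  by rewrite /postI /= /isum big_cons big_nil /icz /= addr0.
reflexivity.
Qed.

Lemma termN : exists io iu P Q,
  aff_term U2 A2 (resolve Dex 0%N Neg) 0%N = term_form Neg io (Wg U2 A2 io iu P Q) /\ io = i1.
Proof.
have kP : kind (resolve Dex 0%N Neg) 0%N != Dbl by [].
have M1 : forall i, ((0%N, over_flag (kind (resolve Dex 0%N Neg) 0%N)) \in words (resolve Dex 0%N Neg) i) = (i == i1).
  by case=> [[|[|m]] Hm].
have M2 : forall i, ((0%N, ~~ over_flag (kind (resolve Dex 0%N Neg) 0%N)) \in words (resolve Dex 0%N Neg) i) = (i == i0).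
  by case=> [[|[|m]] Hm].
rewrite (aff_term_form U2 A2 kP M1 M2).
by do 4 eexists; split; [reflexivity|].
Qed.

Lemma vext_rec_nil (M : nat -> zmodType) (V : forall m, diagram m -> M m) n (E : diagram n) :
  vext_rec V E [::] = V n E.
Proof. by []. Qed.

Lemma not_v0 : ~ vorder_le affp 0.
Proof.
move=> H; have E := H 2%N Dex wfex.
have {E} E : vext affp Dex = 0 by apply: E; rewrite dp.
move: E; rewrite /vext dp vext_rec_cons !vext_rec_nil !affpE termP.
have [io [iu [P [Q [-> ->]]]]] := termN.
set g1 := Wg U2 A2 i0 i1 0 1.
set g2 := Wg U2 A2 i1 iu P Q.
pose m1 : {ffun 'I_2 -> formalG 2} := [ffun j => if j == i0 then g1 else 0].
pose m2 : {ffun 'I_2 -> formalG 2} := [ffun j => if j == i1 then g2 else 0].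
have g1n : g1 != 0 := g1_neq0.
have e11 : (m1 == m1) = true by rewrite eqxx.
have e21 : (m2 == m1) = false.
  apply/eqP => /ffunP/(_ i0); rewrite !ffunE /= => h.
  by move: g1n; rewrite -h eqxx.
have e01 : (0 == m1) = false.
  apply/eqP => /ffunP/(_ i0); rewrite !ffunE /= => h.
  by move: g1n; rewrite -h eqxx.
move=> /(congr1 (mcoeff m1)).
rewrite /term_form /tmon -/m1 -/m2 mcoeff0 !mcoeffB mcoeffN mcoeffB !mcoeffU e11 e21 e01.
by [].
Qed.


Local Close Scope ring_scope.

Theorem proposition6 :
  (forall (n : nat) (D D' : diagram n),
      wf D -> classical D -> rmove D D' -> affp D = affp D') /\
  (vorder_le affp 1 /\ ~ vorder_le affp 0).
Proof.
split; last by split; [exact: vorder1 | exact: not_v0].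
move=> n D D' wfD _ [[h|h|h]|[h|h|h]].
- exact: (R1_inv (formal_u n) (@formal_labels n) h).
- exact: (R2_inv (formal_u n) (@formal_labels n) h).
- exact: (R3_inv (formal_u n) (@formal_labels n) h (or_introl wfD)).
- symmetry; exact: (R1_inv (formal_u n) (@formal_labels n) h).
- symmetry; exact: (R2_inv (formal_u n) (@formal_labels n) h).
- symmetry; exact: (R3_inv (formal_u n) (@formal_labels n) h (or_intror wfD)).
Qed.
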